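(* Let $n\ge 2$, $d_1,\dots,d_n\ge 1$, $L_i\in\mathbb{C}^{d_i\times d_i}$ ($i=1,\dots,n$) and $C_{i,i-1}\in\mathbb{C}^{d_i\times d_{i-1}}$ ($i=2,\dots,n$). Assume: (i) each $L_i$ is invertible and diagonalizable, $L_iV_i=V_i\Lambda_i$ with $V_i$ invertible and $\Lambda_i=\mathrm{diag}(\lambda_{i,1},\dots,\lambda_{i,d_i})$; (ii) $\sigma(L_i)\cap\sigma(L_j)=\emptyset$ for all $i\neq j$; (iii) $\|L_1\|<\|L_2\|<\cdots<\|L_n\|\le 1$. Then for all $i\in\{2,\dots,n\}$, all $x=(x_1,\dots,x_n)$ and all $t\in\mathbb{N}$, $$\big\|\Pi_i\circ\mathsf{Lin}^{\circ t}(x)-L_i^t\,\mathsf{pert}_i(x_1,\dots,x_i)\big\|\le\sum_{j=1}^{i-1}\|D_{i,j}\|\,\big\|L_j^t\,\mathsf{pert}_j(x_1,\dots,x_j)\big\|,$$ and $$\lim_{t\to\infty}\frac{\big\|\Pi_i\circ\mathsf{Lin}^{\circ t}(x)-L_i^t\,\mathsf{pert}_i(x_1,\dots,x_i)\big\|}{\|L_i\|^t}=0.$$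
   Context: Each $\mathbb{C}^{d_i}$ carries a fixed norm $\|\cdot\|$ and matrices the induced operator norm. $\Pi_i(x_1,\dots,x_n)=x_i$; $\mathsf{Lin}(x_1,\dots,x_n)=(L_1x_1,\;L_2x_2+C_{2,1}x_1,\;\dots,\;L_nx_n+C_{n,n-1}x_{n-1})$ and $\mathsf{Lin}^{\circ t}$ is its $t$-fold iterate. Matrices $D_{i,j}$ ($1\le j\le i\le n$) are defined recursively in $i$: $D_{i,i}=I_{d_i}$; for $i\ge 2$ and $1\le j\le i-1$, $[\tilde C_{i,j}]_{\ell,m}=[V_i^{-1}C_{i,i-1}D_{i-1,j}V_j]_{\ell,m}(1-\lambda_{j,m}/\lambda_{i,\ell})^{-1}$ and $D_{i,j}=L_i^{-1}V_i\tilde C_{i,j}V_j^{-1}$. The maps $\mathsf{pert}_i$ are $\mathsf{pert}_1(x_1)=x_1$ and $\mathsf{pert}_i(x_1,\dots,x_i)=x_i+\sum_{j=1}^{i-1}(-1)^{i-1-j}D_{i,j}\mathsf{pert}_j(x_1,\dots,x_j)$ for $i\ge 2$. *)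

(* Defs.v *)
From HB Require Import structures.
From mathcomp Require Import all_boot all_order all_algebra.
From mathcomp Require Import all_classical all_reals all_analysis.
From mathcomp Require Import complex.
Set Implicit Arguments. Unset Strict Implicit. Unset Printing Implicit Defensive.
Import Order.TTheory GRing.Theory Num.Theory.
Local Open Scope ring_scope.
Local Open Scope classical_set_scope.

Definition cmod {R : realType} (z : R[i]) : R := ComplexField.Normc.normc z.

Definition is_norm {R : realType} (m : nat) (N : 'cV[R[i]]_m -> R) : Prop :=
  [/\ forall x, 0 <= N x,
      forall x, N x = 0 -> x = 0,
      forall (a : R[i]) x, N (a *: x) = cmod a * N x
    & forall x y, N (x + y) <= N x + N y].

Definition opnorm {R : realType} (m k : nat) (Nin : 'cV[R[i]]_m -> R)
  (Nout : 'cV[R[i]]_k -> R) (A : 'M[R[i]]_(k, m)) : R :=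
  sup [set Nout (A *m x) | x in [set x | Nin x <= 1]].

Section Defs.
Context {R : realType}.
Local Notation C := R[i].

(* The linear map Lin on tuples x = (x_i)_i with x_i in C^{d_i}
   (indices 1..n are meaningful; index 0 and indices > n are never read
   by components 1..n). *)
Definition Lin (d : nat -> nat) (L : forall i, 'M[C]_(d i))
  (Cm : forall i, 'M[C]_(d i, d i.-1)) (x : forall i, 'cV[C]_(d i)) :
  forall i, 'cV[C]_(d i) :=
  fun i => L i *m x i + (if (1 < i)%N then Cm i *m x i.-1 else 0).

(* The matrices D_{i,j}: Dm i j is D_{i,j} for 1 <= j <= i;
   D_{i,i} = I, and for j < i the recursive formula of the paper.
   Values outside that range are irrelevant (set to 0). *)
Fixpoint Dm (d : nat -> nat) (L : forall i, 'M[C]_(d i))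
  (Cm : forall i, 'M[C]_(d i, d i.-1)) (V : forall i, 'M[C]_(d i))
  (lam : forall i, 'I_(d i) -> C) (i : nat) : forall j, 'M[C]_(d i, d j) :=
  match i as i0 return forall j, 'M[C]_(d i0, d j) with
  | 0 => fun j => 0
  | i'.+1 => fun j =>
      if j == i'.+1 then conform_mx 0 (1%:M : 'M[C]_(d i'.+1))
      else if ((0 < j) && (j < i'.+1))%N then
        let Ct : 'M[C]_(d i'.+1, d j) :=
          \matrix_(l, m)
            ((invmx (V i'.+1) *m Cm i'.+1 *m Dm L Cm V lam i' j *m V j) l m
             * (1 - lam j m / lam i'.+1 l)^-1) in
        invmx (L i'.+1) *m V i'.+1 *m Ct *m invmx (V j)
      else 0
  end.

(* pertAll k j = pert_j(x_1,...,x_j) for 1 <= j <= k (0 otherwise). *)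
Fixpoint pertAll (d : nat -> nat) (D : forall i j, 'M[C]_(d i, d j))
  (x : forall i, 'cV[C]_(d i)) (k : nat) : forall j, 'cV[C]_(d j) :=
  match k with
  | 0 => fun j => 0
  | k'.+1 => fun j =>
      if ((0 < j) && (j <= k'.+1))%N then
        x j + \sum_(1 <= m < j)
                 ((-1) ^+ (j.-1 - m) *: (D j m *m pertAll D x k' m))
      else 0
  end.

Definition pert (d : nat -> nat) (D : forall i j, 'M[C]_(d i, d j))
  (x : forall i, 'cV[C]_(d i)) (i : nat) : 'cV[C]_(d i) :=
  pertAll D x i i.

End Defs.

(* Main.v *)
Require Import Defs.
From HB Require Import structures.
From mathcomp Require Import all_boot all_order all_algebra.
From mathcomp Require Import all_classical all_reals all_analysis.
From mathcomp Require Import complex.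
From mathcomp Require Import ring lra zify.
Import Order.TTheory GRing.Theory Num.Theory.
Import numFieldNormedType.Exports.
Local Open Scope ring_scope.
Local Open Scope classical_set_scope.

Section Alg.
Variables (R : realType) (n : nat) (d : nat -> nat).
Local Notation C := R[i].
Variables (L : forall i, 'M[C]_(d i)) (Cm : forall i, 'M[C]_(d i, d i.-1))
  (V : forall i, 'M[C]_(d i)) (lam : forall i, 'I_(d i) -> C).
Hypothesis HLV : forall i, (1 <= i <= n)%N ->
     [/\ L i \in unitmx, V i \in unitmx
       & L i *m V i = V i *m diag_mx (\row_k lam i k)].
Hypothesis Hspec : forall i j, (1 <= i <= n)%N -> (1 <= j <= n)%N -> i != j ->
     forall a : C, ~~ (eigenvalue (L i) a && eigenvalue (L j) a).

Lemma VL i : (1 <= i <= n)%N ->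
  invmx (V i) *m L i = diag_mx (\row_k lam i k) *m invmx (V i).
Proof.
move=> hi; have [uL uV e] := HLV _ hi.
rewrite -[RHS]mul1mx -(mulVmx uV) -mulmxA (mulmxA (V i)) -e.
by rewrite -mulmxA mulmxV // mulmx1.
Qed.

Lemma rowV_neq0 i l : (1 <= i <= n)%N -> row l (invmx (V i)) != 0.
Proof.
move=> hi; have [uL uV e] := HLV _ hi.
apply/eqP => h0.
have : row l (invmx (V i) *m V i) = 0 by rewrite row_mul h0 mul0mx.
rewrite mulVmx // => /rowP /(_ l); rewrite !mxE eqxx /= => /eqP.
by rewrite oner_eq0.
Qed.

Lemma lam_eig i l : (1 <= i <= n)%N -> eigenvalue (L i) (lam i l).
Proof.
move=> hi; apply/eigenvalueP; exists (row l (invmx (V i))); last exact: rowV_neq0.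
rewrite -row_mul VL //; apply/rowP => k.
by rewrite mul_diag_mx !mxE.
Qed.

Lemma lam_neq0 i l : (1 <= i <= n)%N -> lam i l != 0.
Proof.
move=> hi; have [uL uV e] := HLV _ hi.
apply/eqP => h0; have /eqP := @rowV_neq0 i l hi; apply.
have h : row l (invmx (V i)) *m L i = 0.
  by rewrite -row_mul VL //; apply/rowP => k; rewrite mul_diag_mx !mxE h0 mul0r.
by rewrite -[LHS]mulmx1 -(mulmxV uL) mulmxA h mul0mx.
Qed.

Lemma lam_diff i j l m : (1 <= i <= n)%N -> (1 <= j <= n)%N -> i != j ->
  lam i l != lam j m.
Proof.
move=> hi hj ij; apply/eqP => e.
by have := Hspec _ _ hi hj ij (lam i l); rewrite lam_eig // e lam_eig.
Qed.


Lemma sandwich a b (X : 'M[C]_(d a, d b)) : (1 <= a <= n)%N -> (1 <= b <= n)%N ->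
  X = V a *m (invmx (V a) *m X *m V b) *m invmx (V b).
Proof.
move=> ha hb; have [_ ua _] := HLV _ ha; have [_ ub _] := HLV _ hb.
by rewrite !mulmxA mulmxV // mul1mx -mulmxA mulmxV // mulmx1.
Qed.

Lemma sylv i' j : (1 <= i')%N -> (i'.+1 <= n)%N -> (0 < j < i'.+1)%N ->
  L i'.+1 *m Dm L Cm V lam i'.+1 j - Dm L Cm V lam i'.+1 j *m L j
  = Cm i'.+1 *m Dm L Cm V lam i' j.
Proof.
move=> hi' hn hj.
have hji : j != i'.+1 by rewrite neq_ltn; case/andP: hj => _ ->.
have hI : (1 <= i'.+1 <= n)%N by rewrite hn.
have hJ : (1 <= j <= n)%N.
  case/andP: hj => -> /= h; apply: leq_trans hn; exact: ltnW.
have [uLi uVi eLi] := HLV _ hI; have [uLj uVj eLj] := HLV _ hJ.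
rewrite /= (negbTE hji) hj.
set A := (invmx (V i'.+1) *m Cm i'.+1 *m Dm L Cm V lam i' j *m V j).
set Ct := \matrix_(l, m) _.
set Dij := invmx (L i'.+1) *m V i'.+1 *m Ct *m invmx (V j).
rewrite [RHS](sandwich _ _ _ hI hJ) [in RHS](mulmxA (invmx (V i'.+1))) -/A.
rewrite [LHS](sandwich _ _ _ hI hJ); congr (_ *m _ *m _).
have t1 : invmx (V i'.+1) *m (L i'.+1 *m Dij) *m V j = Ct.
  have e1 : L i'.+1 *m Dij = V i'.+1 *m Ct *m invmx (V j).
    by rewrite /Dij !mulmxA mulmxV // mul1mx.
  by rewrite e1 !mulmxA mulVmx // mul1mx -mulmxA mulVmx // mulmx1.
pose P := invmx (V i'.+1) *m invmx (L i'.+1) *m V i'.+1.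
have t2 : invmx (V i'.+1) *m (Dij *m L j) *m V j
          = P *m Ct *m diag_mx (\row_k lam j k).
  rewrite -mulmxA -mulmxA eLj /Dij /P !mulmxA -[_ *m invmx (V j) *m V j]mulmxA.
  by rewrite mulVmx // mulmx1.
have hP : diag_mx (\row_k lam i'.+1 k) *m P = 1%:M.
  rewrite /P !mulmxA -VL // -[_ *m L _ *m _]mulmxA mulmxV // mulmx1 mulVmx //.
rewrite mulmxBr mulmxBl t1 t2.
apply/matrixP => l m.
have hE : (P *m Ct) l m = Ct l m / lam i'.+1 l.
  have h2 : diag_mx (\row_k lam i'.+1 k) *m (P *m Ct) = Ct.
    by rewrite mulmxA hP mul1mx.
  move/matrixP: h2 => /(_ l m).
  rewrite mul_diag_mx !mxE => <-.
  by rewrite mulrAC divff ?mul1r // lam_neq0.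
have nz1 := @lam_neq0 i'.+1 l hI.
have nz2 : lam i'.+1 l - lam j m != 0.
  rewrite subr_eq0 (@lam_diff i'.+1 j) //.
  by rewrite eq_sym neq_ltn; case/andP: hj => _ ->.
have hE2 : (P *m Ct *m diag_mx (\row_k lam j k)) l m = Ct l m / lam i'.+1 l * lam j m.
  by rewrite mul_mx_diag mxE hE; congr (_ * _); rewrite mxE.
rewrite mxE [X in _ + X]mxE hE2 /Ct mxE.
field.
by rewrite nz1 nz2.
Qed.


Lemma Dii i : (0 < i)%N -> Dm L Cm V lam i i = 1%:M.
Proof. by case: i => // i _ /=; rewrite eqxx conform_mx_id. Qed.

Lemma pertAllS (D : forall i j, 'M[C]_(d i, d j)) x k j :
  pertAll D x k.+1 j =
  if ((0 < j) && (j <= k.+1))%N then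
    x j + \sum_(1 <= m < j) ((-1) ^+ (j.-1 - m) *: (D j m *m pertAll D x k m))
  else 0.
Proof. by []. Qed.

Lemma pertAll_S (D : forall i j, 'M[C]_(d i, d j)) x k j : (0 < j <= k)%N ->
  pertAll D x k.+1 j = pertAll D x k j.
Proof.
elim: k j => [|k IH] j hj; first by case/andP: hj => /leq_trans h /h.
rewrite pertAllS [RHS]pertAllS.
have -> : ((0 < j) && (j <= k.+2))%N.
  by case/andP: hj => -> /= h; apply: leq_trans h _.
rewrite hj; congr (_ + _); apply: eq_big_nat => m /andP [h1 h2].
rewrite IH // h1 /=; case/andP: hj => _ h; rewrite -ltnS; exact: leq_trans h2 h.
Qed.

Lemma pert_eq (D : forall i j, 'M[C]_(d i, d j)) x k j : (0 < j <= k)%N ->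
  pertAll D x k j = pert D x j.
Proof.
elim: k => [|k IH] hj; first by case/andP: hj => /leq_trans h /h.
case/andP: hj => h0; rewrite leq_eqVlt => /orP [/eqP -> //|h].
by rewrite pertAll_S ?IH // h0.
Qed.


Lemma mul1mx' m p (A : 'M[C]_(m, p)) : (1 : 'M[C]_m) *m A = A.
Proof. by rewrite -idmxE mul1mx. Qed.

Lemma exprSmx m p (A : 'M[C]_m) k (B : 'M[C]_(m, p)) :
  A ^+ k.+1 *m B = A *m (A ^+ k *m B).
Proof. by rewrite exprS mulmxA mulmxE. Qed.

Lemma sgnS a b : (b <= a)%N -> (-1 : C) ^+ (a.+1 - b) = - (-1) ^+ (a - b).
Proof. by move=> h; rewrite subSn // exprS mulN1r. Qed.

Lemma closed_form x t i : (1 <= i <= n)%N ->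
  iter t (Lin L Cm) x i =
  \sum_(1 <= j < i.+1) ((-1) ^+ (i - j) *:
      (Dm L Cm V lam i j *m (L j ^+ t *m pert (Dm L Cm V lam) x j))).
Proof.
set D := Dm L Cm V lam.
elim: t i => [|t IH] i hi.
  case: i hi => // i' hi; rewrite big_nat_recr //= subnn !expr0 scale1r.
  rewrite /D Dii // mul1mx -/D.
  rewrite [pert _ _ _]/pert pertAllS ltn0Sn leqnn /=.
  rewrite mul1mx'.
  have -> : \sum_(1 <= m < i'.+1) ((-1) ^+ (i' - m) *: (D i'.+1 m *m pertAll D x i' m))
     = - \sum_(1 <= j < i'.+1) ((-1) ^+ (i'.+1 - j) *: (D i'.+1 j *m (L j ^+ 0 *m pert D x j))).
    rewrite -sumrN; apply: eq_big_nat => m /andP [h1 h2].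
    have hm : (m <= i')%N by rewrite -ltnS.
    rewrite sgnS //.
    by rewrite scaleNr opprK expr0 mul1mx' pert_eq // h1 hm.
  by rewrite addrCA subrr addr0.
rewrite iterS /Lin IH //.
case: i hi IH => // i' hi IH.
case: i' hi IH => [|i'] hi IH.
  by rewrite /= !big_nat1 subnn !expr0 !scale1r /D Dii // !mul1mx' addr0 exprSmx.
rewrite [(1 < _)%N]/= IH; last by case/andP: hi => _ /ltnW ->.
set i := i'.+2.
rewrite mulmx_sumr mulmx_sumr big_nat_recr //= [in RHS]big_nat_recr //=.
rewrite subnn !expr0 !scale1r /D Dii // !mul1mx' -/D.
rewrite -addrA [X in _ + X]addrC addrA exprS -mulmxE mulmxA.
congr (_ + _); rewrite -big_split /=; apply: eq_big_nat => j /andP [h1 h2].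
have hj : (j <= i'.+1)%N by rewrite -ltnS.
rewrite sgnS // -!scalemxAr scaleNr exprSmx !mulmxA.
have hn : (i <= n)%N by case/andP: hi.
have hs := @sylv i'.+1 j erefl hn; rewrite -/D -/i in hs.
rewrite -hs; last by rewrite h1.
by rewrite !mulmxBl scalerBr addrA addNr add0r scaleNr.
Qed.

End Alg.

Section Norms.
Set Implicit Arguments. Unset Strict Implicit.
Variable R : realType.
Local Notation C := R[i].

Lemma cmod_ge0 (z : C) : 0 <= cmod z.
Proof. by case: z => a b; rewrite /cmod /= sqrtr_ge0. Qed.

Lemma cmodM (a b : C) : cmod (a * b) = cmod a * cmod b.
Proof. exact: ComplexField.Normc.normcM. Qed.

Lemma cmodD (a b : C) : cmod (a + b) <= cmod a + cmod b.
Proof. exact: le_normcD. Qed.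

Lemma cmod_real (r : R) : cmod (r%:C)%C = `|r|.
Proof. by rewrite /cmod /= expr0n /= addr0 sqrtr_sqr. Qed.

Lemma cmod0 : cmod (0 : C) = 0.
Proof. by rewrite -[0 : C]/((0:R)%:C)%C cmod_real normr0. Qed.

Lemma cmodN1X k : cmod ((-1 : C) ^+ k) = 1.
Proof.
have h1 : cmod (1 : C) = 1 by exact: ComplexField.Normc.normc1.
elim: k => [|k IH]; first by rewrite expr0.
rewrite exprS cmodM IH mulr1.
transitivity (cmod (1:C)); [exact: (@normcN R 1) | exact: h1].
Qed.

Lemma cmod_le (a b : R) : cmod (a +i* b)%C <= `|a| + `|b|.
Proof.
rewrite /cmod /= -[leRHS]ger0_norm ?addr_ge0 // -sqrtr_sqr ler_sqrt ?sqr_ge0 //.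
rewrite sqrrD addrAC (real_normK (num_real a)) (real_normK (num_real b)).
by rewrite lerDl mulrn_wge0 // mulr_ge0.
Qed.

Lemma cmod_eq0 (z : C) : cmod z = 0 -> z = 0.
Proof. exact: ComplexField.Normc.eq0_normc. Qed.

Section OneNorm.
Variables (m : nat) (N : 'cV[C]_m -> R).
Hypothesis hN : is_norm N.

Lemma N_ge0 x : 0 <= N x. Proof. by case: hN. Qed.
Lemma N_eq0 x : N x = 0 -> x = 0. Proof. by case: hN => _ h _ _; exact: h. Qed.
Lemma NZ a x : N (a *: x) = cmod a * N x. Proof. by case: hN => _ _ h _; exact: h. Qed.
Lemma ND x y : N (x + y) <= N x + N y. Proof. by case: hN => _ _ _ h; exact: h. Qed.

Lemma N0 : N 0 = 0.
Proof. by rewrite -(scale0r (0 : 'cV[C]_m)) NZ cmod0 mul0r. Qed.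

Lemma NN x : N (- x) = N x.
Proof. by rewrite -scaleN1r NZ (cmodN1X 1) mul1r. Qed.

Lemma Nsum I (r : seq I) (P : pred I) (F : I -> 'cV[C]_m) :
  N (\sum_(i <- r | P i) F i) <= \sum_(i <- r | P i) N (F i).
Proof.
apply: (big_rec2 (fun v s => N v <= s)); first by rewrite N0.
by move=> i v s _ h; apply: le_trans (ND _ _) _; rewrite lerD2l.
Qed.

Lemma Ndist x y : `|N x - N y| <= N (x - y).
Proof.
rewrite ler_distl; apply/andP; split.
  have := ND (y - x) x; rewrite subrK -opprB NN => h.
  by rewrite lerBlDr addrC.
have := ND (x - y) y; rewrite subrK => h.
by rewrite addrC.
Qed.


Definition phi (v : 'rV[R]_(m + m)) : 'cV[C]_m :=
  \col_k ((v 0 (lshift m k)) +i* (v 0 (rshift m k)))%C.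
Definition psi (x : 'cV[C]_m) : 'rV[R]_(m + m) :=
  row_mx (\row_k complex.Re (x k 0)) (\row_k complex.Im (x k 0)).

Lemma phi_psi x : phi (psi x) = x.
Proof.
apply/matrixP => k j; rewrite (ord1 j) mxE row_mxEl row_mxEr !mxE.
by case: (x k 0).
Qed.

Lemma phiB v w : phi (v - w) = phi v - phi w.
Proof. by apply/matrixP => k j; rewrite !mxE. Qed.

Lemma phiZ (r : R) v : phi (r *: v) = (r%:C)%C *: phi v.
Proof.
apply/matrixP => k j; rewrite !mxE /=; apply/eqP.
by rewrite eq_complex /= !mul0r subr0 addr0 !eqxx.
Qed.

Lemma phi_inj0 v : phi v = 0 -> v = 0.
Proof.
move=> h; rewrite -[v]hsubmxK.
have hk k : v 0 (lshift m k) = 0 /\ v 0 (rshift m k) = 0.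
  move/matrixP: h => /(_ k 0); rewrite !mxE => -[-> ->]; by [].
have -> : lsubmx v = 0 by apply/rowP => k; rewrite !mxE (hk k).1.
have -> : rsubmx v = 0 by apply/rowP => k; rewrite !mxE (hk k).2.
by rewrite row_mx0.
Qed.

Lemma entry_le (v : 'rV[R]_(m + m)) j : `|v 0 j| <= `|v|.
Proof.
change (`|v 0 j| <= mx_norm v); rewrite mx_normrE; apply/bigmax_geP; right => /=.
by exists (0, j).
Qed.

Lemma col_delta (x : 'cV[C]_m) : x = \sum_k x k 0 *: delta_mx k 0.
Proof.
rewrite [LHS]matrix_sum_delta; apply: eq_bigr => k _.
by rewrite big_ord1.
Qed.

Definition Kup := \sum_(k < m) 2 * N (delta_mx k 0).

Lemma Kup_ge0 : 0 <= Kup.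
Proof. by apply: sumr_ge0 => k _; rewrite mulr_ge0 // N_ge0. Qed.

Lemma phi_up v : N (phi v) <= Kup * `|v|.
Proof.
rewrite {1}[phi v]col_delta; apply: le_trans (Nsum _ _ _) _.
rewrite /Kup mulr_suml; apply: ler_sum => k _; rewrite NZ.
rewrite mulrAC ler_wpM2r ?N_ge0 //.
rewrite mxE; apply: le_trans (cmod_le _ _) _.
by rewrite mulr2n mulrDl mul1r lerD ?entry_le.
Qed.

Lemma M_cont : continuous (fun v => N (phi v)).
Proof.
move=> x; apply/(@cvgrPdist_lt _ _ _ (nbhs x) (nbhs_filter x)) => e e0.
have K1 : 0 < Kup + 1 by rewrite ltr_wpDl ?Kup_ge0.
near=> t.
apply: le_lt_trans (Ndist _ _) _; rewrite -phiB.
apply: le_lt_trans (phi_up _) _.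
have : `|x - t| < e / (Kup + 1) by near: t; apply: cvgr_dist_lt => //; exact: divr_gt0.
rewrite ltr_pdivlMr // => h.
apply: le_lt_trans h; rewrite [leRHS]mulrDr mulr1 mulrC lerDl //.
Unshelve. all: by end_near.
Qed.

Lemma M_lower : (0 < m)%N ->
  exists2 mu, 0 < mu & forall v, mu * `|v| <= N (phi v).
Proof.
move=> m0.
pose S := [set v : 'rV[R]_(m + m) | `|v| = 1].
have cS : compact S.
  apply: bounded_closed_compact.
    rewrite /= /bounded_near; near=> M => x /= ->.
    near: M; apply: nbhs_pinfty_ge; exact: num_real.
  have hc := (@norm_continuous R 'rV[R]_(m + m)).
  have h2 := (continuous_closedP _).1 hc [set x : R | x = 1] (@closed_eq R 1).
  exact: h2.
have S0 : S !=set0.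
  pose w : 'rV[R]_(m + m) := const_mx 1.
  have w0 : w != 0.
    apply/eqP => /rowP /(_ (lshift m (Ordinal m0))); rewrite !mxE => /eqP.
    by rewrite oner_eq0.
  exists (`|w|^-1 *: w); rewrite /S /= normrZV // unitfE normr_eq0 //.
have [c Sc hc] := compact_EVT_min S0 cS (continuous_subspaceT M_cont).
have Sc' : `|c| = 1 by move: Sc; rewrite inE.
have mu0 : 0 < N (phi c).
  rewrite lt_def N_ge0 andbT; apply/eqP => /N_eq0 /phi_inj0 c0.
  by move: Sc'; rewrite c0 normr0 => /eqP; rewrite eq_sym oner_eq0.
exists (N (phi c)) => // v.
have [->|v0] := eqVneq v 0; first by rewrite normr0 mulr0 N_ge0.
have nv : 0 < `|v| by rewrite normr_gt0.
have := hc (`|v|^-1 *: v); rewrite inE /S /= normrZV ?unitfE ?gt_eqF // => /(_ erefl).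
have iv : 0 <= `|v|^-1 by rewrite invr_ge0 ltW.
rewrite phiZ NZ cmod_real ger0_norm // => h.
have := ler_wpM2r (ltW nv) h; by rewrite mulrAC mulVf ?gt_eqF // mul1r.
Unshelve. all: by end_near.
Qed.

Lemma norm_equiv : exists2 c, 0 < c & forall (x : 'cV[C]_m) (k : 'I_m), cmod (x k 0) <= c * N x.
Proof.
case: (posnP m) => [m0|m0].
  by exists 1 => // x k; move: (ltn_ord k); rewrite {2}m0.
have [mu mu0 hmu] := M_lower m0.
exists (2 / mu); first by rewrite divr_gt0.
move=> x k; rewrite -{1}(phi_psi x) mxE.
apply: le_trans (cmod_le _ _) _.
apply: (@le_trans _ _ (2 * `|psi x|)).
  by rewrite mulr2n mulrDl mul1r lerD ?entry_le.
rewrite -mulrA ler_wpM2l //.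
have := hmu (psi x); rewrite phi_psi => h.
apply: (@le_trans _ _ (mu^-1 * (mu * `|psi x|))); first by rewrite mulKf ?gt_eqF.
by rewrite ler_wpM2l // invr_ge0 ltW.
Qed.
End OneNorm.


Section Op.
Variables (m k : nat) (Nin : 'cV[C]_m -> R) (Nout : 'cV[C]_k -> R).
Hypotheses (hin : is_norm Nin) (hout : is_norm Nout).

Lemma op_bound (A : 'M[C]_(k, m)) :
  exists2 K, 0 <= K & forall x, Nout (A *m x) <= K * Nin x.
Proof.
have [c c0 hc] := norm_equiv hin.
exists (c * \sum_j Nout (A *m delta_mx j 0)).
  by apply: mulr_ge0; [exact: ltW | apply: sumr_ge0 => j _; exact: (N_ge0 hout)].
move=> x; rewrite {1}[x]col_delta mulmx_sumr.
apply: le_trans (Nsum hout _ _ _) _.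
rewrite mulr_sumr mulr_suml; apply: ler_sum => j _.
rewrite -scalemxAr (NZ hout) mulrAC ler_wpM2r ?(N_ge0 hout) //.
Qed.

Lemma opnorm_has_sup A : has_sup [set Nout (A *m x) | x in [set x | Nin x <= 1]].
Proof.
split.
  exists (Nout (A *m 0)), 0 => //=; by rewrite (N0 hin) ler01.
have [K K0 hK] := op_bound A.
exists K => _ [x hx <-]; apply: le_trans (hK x) _.
by rewrite -[leRHS]mulr1 ler_wpM2l.
Qed.

Lemma opnorm_ge0 A : 0 <= opnorm Nin Nout A.
Proof.
have h0 : [set Nout (A *m x) | x in [set x | Nin x <= 1]] (Nout (A *m 0)).
  by exists 0 => //=; rewrite (N0 hin) ler01.
have := sup_upper_bound (opnorm_has_sup A) h0.
by rewrite mulmx0 (N0 hout).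
Qed.

Lemma opnorm_le A y : Nout (A *m y) <= opnorm Nin Nout A * Nin y.
Proof.
have [y0|ny0] := eqVneq (Nin y) 0.
  by rewrite y0 mulr0 (N_eq0 hin y0) mulmx0 (N0 hout).
have r0 : 0 < Nin y by rewrite lt_def ny0 (N_ge0 hin).
have ir0 : 0 <= (Nin y)^-1 by rewrite invr_ge0 ltW.
pose a : C := (((Nin y)^-1)%:C)%C.
have h0 : [set Nout (A *m x) | x in [set x | Nin x <= 1]]
            (Nout (A *m (a *: y))).
  exists (a *: y) => //=.
  by rewrite (NZ hin) cmod_real ger0_norm // mulVf ?gt_eqF.
have := sup_upper_bound (opnorm_has_sup A) h0.
rewrite -scalemxAr (NZ hout) cmod_real ger0_norm // => h.
have := ler_wpM2r (ltW r0) h; rewrite mulrAC mulVf ?gt_eqF // mul1r; exact.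
Qed.

End Op.

Lemma opnorm_pow m (N : 'cV[C]_m -> R) (hN : is_norm N) (A : 'M[C]_m) t y :
  N (A ^+ t *m y) <= opnorm N N A ^+ t * N y.
Proof.
elim: t => [|t IH]; first by rewrite !expr0 -idmxE mul1mx mul1r.
rewrite exprS -mulmxE -mulmxA exprS -mulrA.
apply: le_trans (opnorm_le hN hN _ _) _.
by rewrite ler_wpM2l // opnorm_ge0.
Qed.

End Norms.

Theorem corollary3 (R : realType) (n : nat) (d : nat -> nat)
  (N : forall i, 'cV[R[i]]_(d i) -> R)
  (L : forall i, 'M[R[i]]_(d i)) (Cm : forall i, 'M[R[i]]_(d i, d i.-1))
  (V : forall i, 'M[R[i]]_(d i)) (lam : forall i, 'I_(d i) -> R[i]) :
  (2 <= n)%N ->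
  (forall i, (1 <= i <= n)%N -> (1 <= d i)%N) ->
  (forall i, (1 <= i <= n)%N -> is_norm (N i)) ->
  (* (i) invertible, diagonalizable: L_i V_i = V_i Lambda_i *)
  (forall i, (1 <= i <= n)%N ->
     [/\ L i \in unitmx, V i \in unitmx
       & L i *m V i = V i *m diag_mx (\row_k lam i k)]) ->
  (* (ii) disjoint spectra *)
  (forall i j, (1 <= i <= n)%N -> (1 <= j <= n)%N -> i != j ->
     forall a : R[i], ~~ (eigenvalue (L i) a && eigenvalue (L j) a)) ->
  (* (iii) ||L_1|| < ... < ||L_n|| <= 1 *)
  (forall i, (1 <= i < n)%N ->
     opnorm (N i) (N i) (L i) < opnorm (N i.+1) (N i.+1) (L i.+1)) ->
  opnorm (N n) (N n) (L n) <= 1 ->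
  let D := Dm L Cm V lam in
  forall i, (2 <= i <= n)%N ->
  forall (x : forall j, 'cV[R[i]]_(d j)),
    (forall t : nat,
       N i ((iter t (Lin L Cm) x) i - L i ^+ t *m pert D x i)
       <= \sum_(1 <= j < i)
            opnorm (N j) (N i) (D i j) * N j (L j ^+ t *m pert D x j))
    /\
    ((fun t : nat =>
        N i ((iter t (Lin L Cm) x) i - L i ^+ t *m pert D x i)
        / opnorm (N i) (N i) (L i) ^+ t) @ \oo --> (0 : R)).
Proof.
move=> hn2 _ hN hLV hspec hchain _ D i hi x.
have hi1 : (1 <= i <= n)%N by case/andP: hi => /ltnW -> ->.
have hin : (i <= n)%N by case/andP: hi.
have hj j : (1 <= j < i)%N -> (1 <= j <= n)%N.
  by case/andP => -> /= h; apply: leq_trans hin; exact: ltnW.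
pose r j := opnorm (N j) (N j) (L j).
have diffE t : iter t (Lin L Cm) x i - L i ^+ t *m pert D x i =
    \sum_(1 <= j < i) ((-1) ^+ (i - j) *: (D i j *m (L j ^+ t *m pert D x j))).
  rewrite /D (closed_form _ _ _ _ _ _ _ hLV hspec x t i hi1) big_nat_recr /=; last by case/andP: hi1.
  by rewrite subnn expr0 scale1r (Dii _ _ _ _ _ _ i) ?mul1mx ?addrK //; case/andP: hi1.
have part1 t : N i (iter t (Lin L Cm) x i - L i ^+ t *m pert D x i)
       <= \sum_(1 <= j < i) opnorm (N j) (N i) (D i j) * N j (L j ^+ t *m pert D x j).
  rewrite diffE; apply: le_trans (Nsum (hN i hi1) _ _ _) _.
  apply: ler_sum_nat => j hji.
  rewrite (NZ (hN i hi1)) cmodN1X mul1r.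
  exact: (opnorm_le (hN j (hj j hji)) (hN i hi1)).
split => //.
have hr0 j : (1 <= j <= n)%N -> 0 <= r j.
  by move=> h; exact: (opnorm_ge0 (hN j h) (hN j h)).
have mono a : (1 <= a <= n)%N -> forall j, (1 <= j <= a)%N -> r j <= r a.
  elim: a => [|a IH] ha j hja; first by case/andP: ha.
  have [-> //|ne] := eqVneq j a.+1.
  have hja' : (1 <= j <= a)%N.
    by case/andP: hja => -> /=; rewrite leq_eqVlt (negbTE ne).
  have ha1 : (1 <= a)%N by case/andP: hja' => h1 h2; exact: leq_trans h1 h2.
  have han : (a < n)%N by case/andP: ha.
  apply: le_trans (IH _ _ hja') _; first by rewrite ha1 ltnW.
  by apply: ltW; apply: hchain; rewrite ha1.
have i1 : (1 <= i.-1)%N by case/andP: hi => h _; rewrite -ltnS prednK // ltnW.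
have ipred : i.-1.+1 = i by rewrite prednK //; case/andP: hi1.
have hi' : (1 <= i.-1 <= n)%N by rewrite i1 /=; apply: leq_trans hin; exact: leq_pred.
have rlt : r i.-1 < r i.
  have := hchain i.-1; rewrite ipred; apply.
  by move: hi; clear; lia.
have ri0 : 0 < r i by apply: le_lt_trans rlt; exact: hr0.
pose q := r i.-1 / r i.
have q0 : 0 <= q by apply: divr_ge0; [exact: hr0 | exact: ltW].
have q1 : q < 1 by rewrite /q ltr_pdivrMr // mul1r.
pose K := \sum_(1 <= j < i) opnorm (N j) (N i) (D i j) * N j (pert D x j).
have bound t : N i (iter t (Lin L Cm) x i - L i ^+ t *m pert D x i) <= K * r i.-1 ^+ t.
  apply: le_trans (part1 t) _; rewrite mulr_suml; apply: ler_sum_nat => j hji.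
  have hJ := hj j hji.
  rewrite -mulrA ler_wpM2l ?(opnorm_ge0 (hN j hJ) (hN i hi1)) //.
  apply: le_trans (opnorm_pow (hN j hJ) (L j) t _) _.
  rewrite mulrC ler_wpM2l ?(N_ge0 (hN j hJ)) //.
  apply: lerXn2r; rewrite ?nnegrE ?hr0 //.
  by apply: mono => //; move: hji hi; clear; lia.
apply: (@squeeze_cvgr _ _ _ _ (fun=> 0) (fun t => K * q ^+ t)).
- near=> t; apply/andP; split.
    by rewrite divr_ge0 ?(N_ge0 (hN i hi1)) // exprn_ge0 // ltW.
  rewrite ler_pdivrMr ?exprn_gt0 // expr_div_n mulrA divfK //.
  by rewrite expf_neq0 // gt_eqF.
- exact: cvg_cst.
- have := cvgM (cvg_cst K) (cvg_expr (_ : `|q| < 1)); rewrite mulr0; apply.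
  by rewrite ger0_norm.
Unshelve. all: by end_near.
Qed.
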